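(* Let $\mathcal M$ be the class of multilayer networks with $d$ aspects having a common vertex set $L_0$ and common elementary-layer sets $L_1,\dots,L_d$, and let $p\subseteq\{0,\dots,d\}$ be nonempty. Then for all $M,M'\in\mathcal M$, $$\mathrm{Iso}_p(M,M')=\{\boldsymbol\zeta\in P_p : g_p^M(\boldsymbol\zeta)\in\mathrm{Iso}(f_p(M),f_p(M'))\}.$$
   Context: A multilayer network with $d$ aspects is $M=(V_M,E_M,V,\mathbf L)$ with $\mathbf L=(L_1,\dots,L_d)$, $V_M\subseteq V\times L_1\times\dots\times L_d$, $E_M\subseteq V_M\times V_M$; write $L_0=V$ and $\mathbf v=(v_0,\dots,v_d)$. It is assumed that the sets $L_0,\dots,L_d$ are pairwise disjoint and that no tuple in $L_0\times\dots\times L_d$ belongs to any $L_a$. For nonempty $p\subseteq\{0,\dots,d\}$, $P_p=D_0\times\dots\times D_d$ with $D_a=S_{L_a}$ (symmetric group) if $a\in p$ and $D_a=\{1_{L_a}\}$ otherwise. For $\boldsymbol\zeta\in P_p$, $\mathbf v^{\boldsymbol\zeta}=(\zeta_0(v_0),\dots,\zeta_d(v_d))$ and $M^{\boldsymbol\zeta}=(\{\mathbf v^{\boldsymbol\zeta}:\mathbf v\in V_M\},\{(\mathbf v^{\boldsymbol\zeta},\mathbf u^{\boldsymbol\zeta}):(\mathbf v,\mathbf u)\in E_M\},V,\mathbf L)$; $\mathrm{Iso}_p(M,M')=\{\boldsymbol\zeta\in P_p:M^{\boldsymbol\zeta}=M'\}$. A vertex-colored graph is $G=(V_c,E_c,\pi,C)$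 with $E_c\subseteq V_c\times V_c$ and $\pi:V_c\to C$. For a bijection $\gamma:V_c\to V_c'$, $G^\gamma=(\gamma(V_c),\{(\gamma(v),\gamma(u)):(v,u)\in E_c\},\pi\circ\gamma^{-1},C)$, and $\mathrm{Iso}(G,G')$ is the set of bijections $\gamma$ from the vertex set of $G$ to that of $G'$ with $G^\gamma=G'$. Let $\overline p=\{0,\dots,d\}\setminus p=\{\overline p_1<\dots<\overline p_m\}$. Define $f_p(M)=(V_G,E_G,\pi,C)$ by: $V_G=V_M\cup\bigcup_{a\in p}L_a$; $E_G=E_M\cup\{(v_a,\mathbf v):\mathbf v\in V_M,\ a\in p\}$; $C=p\cup(L_{\overline p_1}\times\dots\times L_{\overline p_m})$; $\pi(x)=a$ if $x\in L_a$ with $a\in p$, and $\pi(\mathbf v)=(v_{\overline p_1},\dots,v_{\overline p_m})$ if $\mathbf v\in V_M$. For $\boldsymbol\zeta\in P_p$, let $g_p^M(\boldsymbol\zeta)$ be the bijection from $V_G$ (the vertex set of $f_p(M)$) to the vertex set of $f_p(M^{\boldsymbol\zeta})$ given by $\mathbf v\mapsto\mathbf v^{\boldsymbol\zeta}$ for $\mathbf v\in V_M$ and $x\mapsto\zeta_a(x)$ for $x\in L_a$, $a\in p$. *)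

(* Defs.v *)
From mathcomp Require Import all_boot.
From mathcomp Require Import classical_sets.
Set Implicit Arguments. Unset Strict Implicit. Unset Printing Implicit Defensive.
Local Open Scope classical_set_scope.

Section Multilayer.
(* d aspects: layers L_0 (= V), L_1, ..., L_d indexed by 'I_d.+1 *)
Variables (d : nat) (L : 'I_d.+1 -> Type).

Definition tup := forall a : 'I_d.+1, L a.

Record mnet := MNet { VM : set tup; EM : set (tup * tup) }.

Definition mnet_wf (M : mnet) : Prop :=
  forall u v, EM M (u, v) -> VM M u /\ VM M v.

Definition perms := forall a : 'I_d.+1, L a -> L a.

Definition inP (p : {set 'I_d.+1}) (z : perms) : Prop :=
  (forall a, bijective (z a)) /\ (forall a, a \notin p -> z a = id).

Definition tact (z : perms) (v : tup) : tup := fun a => z a (v a).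

Definition mact (M : mnet) (z : perms) : mnet :=
  MNet (tact z @` VM M)
       ((fun e : tup * tup => (tact z e.1, tact z e.2)) @` EM M).

Definition Iso_p (p : {set 'I_d.+1}) (M M' : mnet) : set perms :=
  [set z | inP p z /\ mact M z = M'].

Record cgraph (Vt C : Type) := CGraph
  { cV : set Vt; cE : set (Vt * Vt); cpi : Vt -> C }.

(* gamma is a bijection from the vertex set of G onto that of G' with
   G^gamma = G' (componentwise: gamma(V) = V', gamma(E) = E',
   pi o gamma^-1 = pi' on V'; the color set C is common). *)
Definition Iso (Vt C : Type) (G G' : cgraph Vt C) : set (Vt -> Vt) :=
  [set g | (forall x y, cV G x -> cV G y -> g x = g y -> x = y)
           /\ g @` cV G = cV G'
           /\ (fun e : Vt * Vt => (g e.1, g e.2)) @` cE G = cE G'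
           /\ (forall x, cV G x -> cpi G' (g x) = cpi G x)].

(* ambient vertex type of f_p(M): tuples (elements of V_M) or elements of
   some L_a (tagged by a), a disjoint union as assumed in the paper *)
Definition vert := (tup + {a : 'I_d.+1 & L a})%type.

(* colors: C = p  \cup  prod_{a \notin p} L_a *)
Definition color (p : {set 'I_d.+1}) :=
  ('I_d.+1 + (forall a : {a : 'I_d.+1 | a \notin p}, L (val a)))%type.

Definition fpi (p : {set 'I_d.+1}) (x : vert) : color p :=
  match x with
  | inl v => inr (fun a => v (val a))
  | inr (existT a _) => inl a
  end.

Definition f_p (p : {set 'I_d.+1}) (M : mnet) : cgraph vert (color p) :=
  CGraph
    ((@inl tup _) @` VM M `|` [set x | exists a (y : L a), a \in p /\ x = inr (existT _ a y)])
    ((fun e : tup * tup => (inl e.1, inl e.2)) @` EM M `|`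
       [set e | exists v a, VM M v /\ a \in p /\ e = (inr (existT _ a (v a)), inl v)])
    (@fpi p).

(* g_p^M(zeta) (as a map on the ambient vertex type; only its restriction
   to the vertex set of f_p(M) matters) *)
Definition g_p (z : perms) (x : vert) : vert :=
  match x with
  | inl v => inl (tact z v)
  | inr (existT a y) => inr (existT _ a (z a y))
  end.

End Multilayer.

(* Main.v *)
Require Import Defs.
From mathcomp Require Import all_boot.
From mathcomp Require Import boolp classical_sets.
From Stdlib Require Import Eqdep_dec.
Local Open Scope classical_set_scope.

Lemma existT_inj2 {d : nat} {L : 'I_d.+1 -> Type} {a : 'I_d.+1} {u v : L a} :
  existT L a u = existT L a v -> u = v.
Proof. apply: inj_pair2_eq_dec; exact: eq_comparable. Qed.

Theorem theorem1 (d : nat) (L : 'I_d.+1 -> Type) (p : {set 'I_d.+1})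
  (Hp : p != finset.set0) (M M' : mnet L) (wfM : mnet_wf M) (wfM' : mnet_wf M') :
  Iso_p p M M' = [set z | inP p z /\ Iso (f_p p M) (f_p p M') (g_p z)].
Proof.
apply/seteqP; split => z /=.
- move=> [[bij idp] <-]; split; first by [].
  split; [|split; [|split]].
  + move=> [v|[a u]] [w|[b y]] _ _ //= H.
    * case: H => H; congr inl; apply: functional_extensionality_dep => a.
      have := congr1 (fun f => f a) H; rewrite /tact /=.
      by case: (bij a) => g gK _ E; rewrite -(gK (v a)) E gK.
    * have {}H : existT L a (z a u) = existT L b (z b y) by case: H.
      have Hab := congr1 (@projT1 _ _) H; simpl in Hab; subst b.
      move/existT_inj2: H; case: (bij a) => g gK _ E.
      by rewrite -(gK u) E gK.
  + apply/seteqP; split => x /=.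
    * move=> [y [[v Hv <-]|[a [u [ap ->]]]] <-].
      -- by left; exists (tact z v) => //; exists v.
      -- by right; exists a, (z a u).
    * move=> [[w [v Hv <-] <-]|[a [y [ap ->]]]].
      -- by exists (inl v) => //; left; exists v.
      -- case: (bij a) => g gK Kg.
         exists (inr (existT L a (g y))); first by right; exists a, (g y).
         by rewrite /= Kg.
  + apply/seteqP; split => x /=.
    * move=> [[e1 e2] [[[v w] H <-]|[v [a [Hv [ap ->]]]]] <-].
      -- by left; exists (tact z v, tact z w) => //; exists (v, w).
      -- right; exists (tact z v), a; split; first by exists v.
         by split.
    * move=> [[e [[v w] H <-] <-]|[v' [a [[v Hv <-] [ap ->]]]]].
      -- by exists (inl v, inl w) => //; left; exists (v, w).
      -- exists (inr (existT L a (v a)), inl v) => //.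
         by right; exists v, a.
  + move=> [v|[a u]] _ //=; congr inr.
    apply: functional_extensionality_dep => -[a ap] /=.
    by rewrite /tact idp.
- move=> [zP [_ [HV [HE _]]]]; split; first by [].
  case: M' HV HE {wfM'} => V' E' HV HE; rewrite /mact; congr MNet.
  + apply/seteqP; split => w /=.
    * move=> [v Hv <-].
      have : cV (f_p p (MNet V' E')) (g_p z (inl v)).
        by rewrite -HV; exists (inl v) => //; left; exists v.
      by move=> /= [[w' Hw' [<-]]|[a [y [_ ?]]]].
    * move=> Hw.
      have : cV (f_p p (MNet V' E')) (inl w) by left; exists w.
      rewrite -HV => -[x Hx Hgx].
      case: Hx => [[v' Hv' Ex]|[b [y [_ Ex]]]]; subst x => //.
      by case: Hgx => <-; exists v'.
  + apply/seteqP; split => e /=.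
    * move=> [[v w] H <-].
      have : cE (f_p p (MNet V' E')) (inl (tact z v), inl (tact z w)).
        by rewrite -HE; exists (inl v, inl w) => //; left; exists (v, w).
      move=> /= [[e' H' Ee]|[v' [a [_ [_ Ee]]]]] //.
      by case: e' H' Ee => v' w' H' [<- <-].
    * case: e => e1 e2 He.
      have : cE (f_p p (MNet V' E')) (inl e1, inl e2) by left; exists (e1, e2).
      rewrite -HE => -[x Hx Hgx].
      case: Hx => [[[v w] H Ex]|[v' [a [_ [_ Ex]]]]]; subst x => //.
      case: Hgx => <- <-; by exists (v, w).
Qed.
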